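(* Let $n$ be a positive integer with $n\equiv0\pmod 4$, and $\epsilon,\Delta\in\mathbb R$. Consider $n$ parties on a ring (indices mod $n$); each even site $2i$ holds a vector $A^{(2i)}\in\{\pm1\}^4$ and each odd site $2i+1$ holds $B^{(2i+1)}\in\{\pm1\}^3$. Define $$J:=\sum_{i=0}^{n/2-1}\Big[(1+\epsilon)\,A^{(2i)T}S_\Delta B^{(2i+1)}+(1-\epsilon)\,B^{(2i+1)T}S_\Delta^{T}A^{(2i+2)}\Big].$$ Then the minimum of $J$ over all such assignments equals $-n\max\{1,|\epsilon|\}\,c(\Delta)$, where $c(\Delta)=4+2|\Delta|$ if $|\Delta|\le2$ and $c(\Delta)=4|\Delta|$ if $|\Delta|>2$.
   Context: $S_\Delta$ is the real $4\times3$ matrix with rows $(1,1,\Delta)$, $(1,-1,-\Delta)$, $(-1,1,-\Delta)$, $(-1,-1,\Delta)$. *)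

(* Defs.v *)
(* the statement is purely algebraic/order-theoretic over the
   reals, so we state it for an arbitrary real field R (covers R = reals). *)
From HB Require Import structures.
From mathcomp Require Import all_boot all_order all_algebra.
Set Implicit Arguments. Unset Strict Implicit. Unset Printing Implicit Defensive.
Import Order.TTheory GRing.Theory Num.Theory.
Local Open Scope ring_scope.

Definition S_Delta (R : nzRingType) (D : R) : 'M[R]_(4, 3) :=
  \matrix_(i < 4, j < 3)
    nth 0 (nth [::] [:: [:: 1; 1; D]; [:: 1; -1; -D];
                        [:: -1; 1; -D]; [:: -1; -1; D]] i) j.

Definition pm1_vec (R : nzRingType) (k : nat) (v : 'cV[R]_k) : Prop :=
  forall j, v j 0 = 1 \/ v j 0 = -1.

Definition J_ring (R : nzRingType) (n : nat) (eps D : R)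
    (A : nat -> 'cV[R]_4) (B : nat -> 'cV[R]_3) : R :=
  \sum_(i < n %/ 2)
    ( (1 + eps) * ((A (((2 * i) %% n)%N))^T *m S_Delta D *m B (((2 * i + 1) %% n)%N)) 0 0
    + (1 - eps) * ((B (((2 * i + 1) %% n)%N))^T *m (S_Delta D)^T
                     *m A (((2 * i + 2) %% n)%N)) 0 0 ).

Definition c_Delta (R : realDomainType) (D : R) : R :=
  if `|D| <= 2 then 4 + 2 * `|D| else 4 * `|D|.

(* Main.v *)
Require Import Defs.
From HB Require Import structures.
From mathcomp Require Import all_boot all_order all_algebra.
From mathcomp Require Import ring lra zify.
Import Order.TTheory GRing.Theory Num.Theory.
Local Open Scope ring_scope.
Definition a0 : 'I_4 := @Ordinal 4 0 isT.
Definition a1 : 'I_4 := @Ordinal 4 1 isT.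
Definition a2 : 'I_4 := @Ordinal 4 2 isT.
Definition a3 : 'I_4 := @Ordinal 4 3 isT.
Definition b0 : 'I_3 := @Ordinal 3 0 isT.
Definition b1 : 'I_3 := @Ordinal 3 1 isT.
Definition b2 : 'I_3 := @Ordinal 3 2 isT.
Section S.
Variable R : realFieldType.
Lemma sum3 (F : 'I_3 -> R) : \sum_(k<3) F k = F b0 + F b1 + F b2.
Proof. rewrite !big_ord_recr big_ord0 Monoid.mul1m; congr (_+_+_); congr F; exact: val_inj. Qed.
Lemma sum4 (F : 'I_4 -> R) : \sum_(k<4) F k = F a0 + F a1 + F a2 + F a3.
Proof. rewrite !big_ord_recr big_ord0 Monoid.mul1m; congr (_+_+_+_); congr F; exact: val_inj. Qed.
Variable D : R.
Lemma Sbsum (b : 'cV[R]_3) : \sum_(j<4) `|(S_Delta D *m b) j 0| =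
  `|b b0 0 + b b1 0 + D * b b2 0| + `|b b0 0 - b b1 0 - D * b b2 0|
 + `|- b b0 0 + b b1 0 - D * b b2 0| + `|- b b0 0 - b b1 0 + D * b b2 0|.
Proof. rewrite sum4 !mxE !sum3 !mxE /=. by rewrite !mul1r !mulN1r !mulNr. Qed.

Ltac normcase := repeat match goal with |- context[ `|?e| ] =>
  let h := fresh in have [h|h] := lerP 0 e; [rewrite (ger0_norm h) | rewrite (ltr0_norm h)] end.

Lemma L1 (p w : R) : `|p + w| + `|p - w| = 2 * Num.max `|p| `|w|.
Proof. have [h|h] := lerP `|p| `|w|; move: h; normcase; move=> *; lra. Qed.

Lemma Sbsum2 (b : 'cV[R]_3) : \sum_(j<4) `|(S_Delta D *m b) j 0| =
  (`|(b b0 0 + b b1 0) + D * b b2 0| + `|(b b0 0 + b b1 0) - D * b b2 0|) +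
  (`|(b b0 0 - b b1 0) + D * b b2 0| + `|(b b0 0 - b b1 0) - D * b b2 0|).
Proof.
rewrite Sbsum.
have -> : - b b0 0 + b b1 0 - D * b b2 0 = - ((b b0 0 - b b1 0) + D * b b2 0) by ring.
have -> : - b b0 0 - b b1 0 + D * b b2 0 = - ((b b0 0 + b b1 0) - D * b b2 0) by ring.
rewrite !normrN; ring.
Qed.

Lemma fin (p q : R) : (`|p| = 2 /\ `|q| = 0) \/ (`|p| = 0 /\ `|q| = 2) ->
  2 * Num.max `|p| `|D| + 2 * Num.max `|q| `|D| = c_Delta D.
Proof.
have hD := normr_ge0 D.
rewrite /c_Delta; case=> [[-> ->]|[-> ->]];
  (have [h|h] := lerP 0 `|D|); (have [h'|h'] := lerP `|D| 2); lra.
Qed.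

Lemma sumabs (b : 'cV[R]_3) : pm1_vec b -> \sum_(j<4) `|(S_Delta D *m b) j 0| = c_Delta D.
Proof.
move=> hb; rewrite Sbsum2 !L1.
have -> : `|D * b b2 0| = `|D| by rewrite normrM; have [->|->] := hb b2; rewrite ?normrN normr1 mulr1.
apply: fin.
have [->|->] := hb b0; have [->|->] := hb b1;
  first [left; split; normcase; lra | right; split; normcase; lra].
Qed.
Lemma bilE (a : 'cV[R]_4) (b : 'cV[R]_3) :
  (a^T *m S_Delta D *m b) 0 0 = \sum_(j<4) a j 0 * (S_Delta D *m b) j 0.
Proof. rewrite -mulmxA mxE; apply: eq_bigr => j _; by rewrite mxE. Qed.

Lemma bilT (a : 'cV[R]_4) (b : 'cV[R]_3) :
  (b^T *m (S_Delta D)^T *m a) 0 0 = (a^T *m S_Delta D *m b) 0 0.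
Proof.
have -> : b^T *m (S_Delta D)^T *m a = (a^T *m S_Delta D *m b)^T
  by rewrite !trmx_mul trmxK mulmxA.
by rewrite mxE.
Qed.

Lemma bnd (a : 'cV[R]_4) (b : 'cV[R]_3) : pm1_vec a -> pm1_vec b ->
  `|(a^T *m S_Delta D *m b) 0 0| <= c_Delta D.
Proof.
move=> ha hb; rewrite bilE -(sumabs _ hb).
apply: le_trans (ler_norm_sum _ _ _) _.
apply: ler_sum => j _; rewrite normrM.
by have [->|->] := ha j; rewrite ?normrN normr1 mul1r.
Qed.

Lemma bilZ (a : 'cV[R]_4) (b : 'cV[R]_3) (x y : R) :
  ((x *: a)^T *m S_Delta D *m (y *: b)) 0 0 = x * y * (a^T *m S_Delta D *m b) 0 0.
Proof.
rewrite !bilE -scalemxAr mulr_sumr; apply: eq_bigr => j _; rewrite !mxE; ring.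
Qed.

Lemma term_lb (k x c : R) : `|x| <= c -> -(`|k| * c) <= k * x.
Proof.
move=> h; have h2 : `|k * x| <= `|k| * c by rewrite normrM ler_wpM2l.
have h3 := ler_norm (- (k * x)); rewrite normrN in h3; lra.
Qed.

Lemma sum_coef (e : R) : `|1 + e| + `|1 - e| = 2 * Num.max 1 `|e|.
Proof.
have [h|h] := lerP 1 `|e|; move: h; normcase; move=> *; lra.
Qed.

Lemma pm1Z (k : nat) (v : 'cV[R]_k) (x : R) : (x = 1 \/ x = -1) -> pm1_vec v ->
  pm1_vec (x *: v).
Proof.
move=> hx hv j; rewrite mxE.
by case: hx => ->; case: (hv j) => ->; rewrite ?mul1r ?mulN1r ?opprK; auto.
Qed.
End S.

Theorem mainTheorem11 (R : realFieldType) (n : nat) (eps D : R)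
    (hn : (0 < n)%N) (h4 : (n %% 4 = 0)%N) :
  (forall (A : nat -> 'cV[R]_4) (B : nat -> 'cV[R]_3),
      (forall k, ~~ odd k -> pm1_vec (A k)) ->
      (forall k, odd k -> pm1_vec (B k)) ->
      - (n%:R) * Num.max 1 `|eps| * c_Delta D <= J_ring n eps D A B)
  /\
  (exists (A : nat -> 'cV[R]_4) (B : nat -> 'cV[R]_3),
      (forall k, ~~ odd k -> pm1_vec (A k)) /\
      (forall k, odd k -> pm1_vec (B k)) /\
      J_ring n eps D A B = - (n%:R) * Num.max 1 `|eps| * c_Delta D).
Proof.
have d4 : (4 %| n)%N by rewrite /dvdn h4.
have d2 : (2 %| n)%N by apply: dvdn_trans d4.
have on : odd n = false by apply/negbTE; rewrite -dvdn2.
have nE : n%:R = (n %/ 2)%:R * 2 :> R by rewrite -natrM divnK.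
set M := Num.max 1 `|eps|; set c := c_Delta D.
split.
  move=> A B hA hB; rewrite /J_ring.
  have -> : - (n%:R) * M * c = \sum_(i < n %/ 2) (- (2 * M * c)).
    rewrite sumr_const card_ord -mulr_natr nE; ring.
  apply: ler_sum => i _.
  rewrite bilT.
  have hoa : ~~ odd ((2*i)%%n) by rewrite odd_mod // oddM.
  have hob : odd ((2*i+1)%%n) by rewrite odd_mod // oddD oddM.
  have hoc : ~~ odd ((2*i+2)%%n) by rewrite odd_mod // oddD oddM.
  have hX := @bnd R D _ _ (hA _ hoa) (hB _ hob).
  have hY := @bnd R D _ _ (hA _ hoc) (hB _ hob).
  have t1 := @term_lb R (1+eps) _ _ hX; have t2 := @term_lb R (1-eps) _ _ hY.
  have s2 : 2*M*c = `|1+eps|*c + `|1-eps|*c by rewrite -mulrDl sum_coef.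
  rewrite -/c in t1 t2; lra.
have [t [u [ht [hu hK]]]] : exists t u : R, (t = 1 \/ t = -1) /\ (u = 1 \/ u = -1) /\
    u * (1 + eps) + u * t * (1 - eps) = 2 * M.
  rewrite /M; have [h|h] := lerP `|eps| 1.
    by exists 1, 1; split; [left|split; [left|ring]].
  have [h2|h2] := lerP 0 eps.
    exists (-1), 1; split; [right|split; [left|]] => //.
    rewrite ger0_norm //; ring.
  exists (-1), (-1); split; [right|split; [right|]] => //.
  rewrite ltr0_norm //; ring.
pose b : 'cV[R]_3 := const_mx 1.
pose a : 'cV[R]_4 := \col_j (if 0 <= (S_Delta D *m b) j 0 then -1 else 1).
have hb : pm1_vec b by move=> j; rewrite mxE; left.
have ha : pm1_vec a by move=> j; rewrite mxE; case: ifP; auto.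
have hab : (a^T *m S_Delta D *m b) 0 0 = - c.
  rewrite bilE /c -(@sumabs R D _ hb) -sumrN; apply: eq_bigr => j _; rewrite mxE.
  case: lerP => h; [rewrite ger0_norm // mulN1r | rewrite ltr0_norm // mul1r opprK] => //.
pose A := fun k : nat => (if (k %% 4 < 2)%N then 1 else t) *: a.
pose B := fun k : nat => (if (k %% 4 < 2)%N then u else u * t) *: b.
have Amod : forall k, A (k %% n)%N = A k by move=> k; rewrite /A modn_dvdm.
have Bmod : forall k, B (k %% n)%N = B k by move=> k; rewrite /B modn_dvdm.
exists A, B; split; [|split].
- move=> k _; apply: pm1Z => //; case: ifP; auto.
- move=> k _; apply: pm1Z => //; case: ifP => _; first by [].
  by case: ht => ->; case: hu => ->; rewrite ?mulr1 ?mulrN1 ?opprK; auto.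
rewrite /J_ring.
have -> : - (n%:R) * M * c = \sum_(i < n %/ 2) (- (u * (1 + eps) + u * t * (1 - eps)) * c).
  rewrite sumr_const card_ord -mulr_natr nE hK; ring.
apply: eq_bigr => i _.
rewrite bilT !Amod !Bmod /A /B !bilZ hab.
have [hp|hp] := boolP ((2 * i) %% 4 < 2)%N.
  have h1 : ((2 * i + 1) %% 4 < 2)%N by lia.
  have h2 : ~~ ((2 * i + 2) %% 4 < 2)%N by lia.
  rewrite h1 (negbTE h2).
  by case: ht => ->; ring.
have h1 : ~~ ((2 * i + 1) %% 4 < 2)%N by lia.
have h2 : ((2 * i + 2) %% 4 < 2)%N by lia.
rewrite (negbTE h1) h2.
by case: ht => ->; ring.
Qed.
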